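(* Let $\Lambda$ be a finite-dimensional algebra over an algebraically closed field $k$ and let $M_1,M_2$ be nonzero uniserial $\Lambda$-modules. Let $$\mathcal{S}(M_1,M_2)=\{1\le l\le\min\{\ell\ell(M_1),\ell\ell(M_2)\}: M_1/J^l(M_1)\simeq \mathrm{Soc}^l(M_2)\}.$$ For each $l\in\mathcal{S}(M_1,M_2)$ fix an isomorphism $M_1/J^l(M_1)\simeq\mathrm{Soc}^l(M_2)$ and let $\alpha_l$ be the composition $M_1\twoheadrightarrow M_1/J^l(M_1)\simeq\mathrm{Soc}^l(M_2)\hookrightarrow M_2$. Then $\{\alpha_l: l\in\mathcal{S}(M_1,M_2)\}$ is a $k$-basis of $\mathrm{Hom}_\Lambda(M_1,M_2)$.
   Context: $J$ denotes the Jacobson radical, $J^l(M)$ the $l$-th radical power of $M$, $\mathrm{Soc}^l(M)$ the $l$-th term of the socle series of $M$, and $\ell\ell(M)$ the Loewy length (smallest $d$ with $J^d(M)=0$). A module is uniserial if its submodules are totally ordered by inclusion. *)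

(* Defs.v *)
From HB Require Import structures.
From mathcomp Require Import all_boot all_order all_algebra.
From mathcomp Require Import falgebra.
Set Implicit Arguments. Unset Strict Implicit. Unset Printing Implicit Defensive.
Import GRing.Theory.
Local Open Scope ring_scope.

(* A finite-dimensional (right) module over the finite-dimensional
   F-algebra A, of F-dimension n, is given by a unital algebra morphism
   rho : A -> 'M_n acting on row vectors:  v . a := v *m rho a. *)
Definition is_rmodule (F : fieldType) (A : falgType F) (n : nat)
  (rho : A -> 'M[F]_n) : Prop :=
  [/\ forall (c : F) (a b : A), rho (c *: a + b) = c *: rho a + rho b,
      rho 1 = 1%:M
    & forall a b : A, rho (a * b) = rho a *m rho b].

Definition vset (F : fieldType) (n : nat) := 'rV[F]_n -> Prop.

Definition sub_le (F : fieldType) (n : nat) (U W : vset F n) : Prop :=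
  forall v, U v -> W v.

Definition zero_set (F : fieldType) (n : nat) : vset F n := fun v => v = 0.

Definition issub (F : fieldType) (A : falgType F) (n : nat)
  (rho : A -> 'M[F]_n) (U : vset F n) : Prop :=
  [/\ U 0,
      forall u v, U u -> U v -> U (u + v),
      forall (c : F) u, U u -> U (c *: u)
    & forall (a : A) u, U u -> U (u *m rho a)].

(* W is a submodule containing N such that W/N is a simple module *)
Definition relsimple (F : fieldType) (A : falgType F) (n : nat)
  (rho : A -> 'M[F]_n) (N W : vset F n) : Prop :=
  [/\ issub rho W, sub_le N W, (exists v, W v /\ ~ N v)
    & forall X, issub rho X -> sub_le N X -> sub_le X W ->
        sub_le X N \/ sub_le W X].

(* radical of a submodule U: intersection of its maximal submodules *)
Definition rad (F : fieldType) (A : falgType F) (n : nat)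
  (rho : A -> 'M[F]_n) (U : vset F n) : vset F n :=
  fun v => U v /\ forall W, issub rho W -> relsimple rho W U -> W v.

Definition radpow (F : fieldType) (A : falgType F) (n : nat)
  (rho : A -> 'M[F]_n) (l : nat) : vset F n :=
  iter l (rad rho) (fun _ => True).

(* preimage in M of Soc(M/N): the submodule generated by N and all W with
   W/N simple *)
Definition relsoc (F : fieldType) (A : falgType F) (n : nat)
  (rho : A -> 'M[F]_n) (N : vset F n) : vset F n :=
  fun v => forall X, issub rho X -> sub_le N X ->
    (forall W, relsimple rho N W -> sub_le W X) -> X v.

Definition socpow (F : fieldType) (A : falgType F) (n : nat)
  (rho : A -> 'M[F]_n) (l : nat) : vset F n :=
  iter l (relsoc rho) (@zero_set F n).

Definition loewy_length (F : fieldType) (A : falgType F) (n : nat)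
  (rho : A -> 'M[F]_n) (d : nat) : Prop :=
  sub_le (radpow rho d) (@zero_set F n) /\
  forall d', (d' < d)%N -> ~ sub_le (radpow rho d') (@zero_set F n).

Definition uniserial (F : fieldType) (A : falgType F) (n : nat)
  (rho : A -> 'M[F]_n) : Prop :=
  forall U W, issub rho U -> issub rho W -> sub_le U W \/ sub_le W U.

Definition is_hom (F : fieldType) (A : falgType F) (n1 n2 : nat)
  (rho1 : A -> 'M[F]_n1) (rho2 : A -> 'M[F]_n2) (f : 'M[F]_(n1, n2)) : Prop :=
  forall a : A, rho1 a *m f = f *m rho2 a.

(* f is the composite M1 ->> M1/J^l(M1) ~ Soc^l(M2) >-> M2 of some
   isomorphism, i.e. a homomorphism with kernel J^l(M1) and image Soc^l(M2) *)
Definition quot_rad_iso_soc (F : fieldType) (A : falgType F) (n1 n2 : nat)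
  (rho1 : A -> 'M[F]_n1) (rho2 : A -> 'M[F]_n2) (l : nat)
  (f : 'M[F]_(n1, n2)) : Prop :=
  [/\ is_hom rho1 rho2 f,
      (forall v, v *m f = 0 <-> radpow rho1 l v)
    & (forall w, socpow rho2 l w <-> exists v, w = v *m f)].

Definition Sset (F : fieldType) (A : falgType F) (n1 n2 : nat)
  (rho1 : A -> 'M[F]_n1) (rho2 : A -> 'M[F]_n2) (d1 d2 l : nat) : Prop :=
  (1 <= l <= minn d1 d2)%N /\ exists f, quot_rad_iso_soc rho1 rho2 l f.

(* Main.v *)
Require Import Defs.
From HB Require Import structures.
From mathcomp Require Import all_boot all_order all_algebra.
From mathcomp Require Import falgebra.
From Stdlib Require Import Classical.
Set Implicit Arguments. Unset Strict Implicit. Unset Printing Implicit Defensive.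
Import GRing.Theory.
Local Open Scope ring_scope.

Definition subsp (F : fieldType) (n : nat) (U : vset F n) : Prop :=
  [/\ U 0, forall u v, U u -> U v -> U (u + v) & forall (c : F) u, U u -> U (c *: u)].

Lemma issub_subsp (F : fieldType) (A : falgType F) (n : nat) (rho : A -> 'M[F]_n) U :
  issub rho U -> subsp U.
Proof. by case=> *; split. Qed.

Lemma subsp_sum (F : fieldType) (n : nat) (U : vset F n) (I : Type) (r : seq I) (P : pred I) (G : I -> 'rV_n) :
  subsp U -> (forall i, P i -> U (G i)) -> U (\sum_(i <- r | P i) G i).
Proof.
case=> U0 UD UZ HG; elim/big_rec: _ => // i x Pi Ux; exact: UD (HG _ Pi) Ux.
Qed.

Lemma subsp_comb (F : fieldType) (n m : nat) (U : vset F n) (B : 'M_(m, n)) (x : 'rV_m) :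
  subsp U -> (forall i, U (row i B)) -> U (x *m B).
Proof.
move=> sU HB; rewrite mulmx_sum_row; apply: subsp_sum => // i _.
by case: sU => _ _ UZ; apply: UZ.
Qed.

Lemma subsp_opp (F : fieldType) (n : nat) (U : vset F n) u : subsp U -> U u -> U (- u).
Proof. by case=> _ _ UZ Uu; rewrite -scaleN1r; apply: UZ. Qed.

Lemma subsp_sub (F : fieldType) (n : nat) (U : vset F n) u v : subsp U -> U u -> U v -> U (u - v).
Proof. by move=> sU Uu Uv; case: (sU) => _ UD _; apply: UD => //; apply: subsp_opp. Qed.

Lemma subsp_mx (F : fieldType) (n : nat) (U : vset F n) :
  subsp U -> exists m (B : 'M[F]_(m, n)), forall v, U v <-> (v <= B)%MS.
Proof.
move=> sU.
have step : forall k, exists m (B : 'M[F]_(m, n)), (forall i, U (row i B)) /\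
   ((k <= \rank B)%N \/ (forall v, U v -> (v <= B)%MS)).
  elim=> [|k [m [B [HB [Hk|Hall]]]]].
  - exists 0%N, 0; split; first by move=> [].
    by left.
  - have [Hk1|Hk1] := boolP (k.+1 <= \rank B)%N.
      by exists m, B; split=> //; left.
    have [Hall|] := classic (forall v, U v -> (v <= B)%MS).
      by exists m, B; split=> //; right.
    move=> Hn; have [v Hv] := not_all_ex_not _ _ Hn; have [Uv vB] := imply_to_and _ _ Hv.
    exists (m + 1)%N, (col_mx B v); split.
      move=> i; rewrite -[i]splitK; case: (split i) => j /=.
        by rewrite rowKu.
      by rewrite rowKd ord1 row_id.
    left.
    have Hlt: (B < col_mx B v)%MS.
      rewrite ltmxE -addsmxE addsmxSl /=; apply/negP=> H; apply: vB.
      by apply: (submx_trans _ H); rewrite -addsmxE addsmxSr.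
    by move/rank_ltmx: Hlt; apply: leq_trans.
  - by exists m, B; split=> //; right.
have [m [B [HB [Hk|Hall]]]] := step n.+1.
  by have := rank_leq_col B; rewrite leqNgt (leq_trans Hk) ?leqnn.
exists m, B => v; split; first exact: Hall.
by case/submxP=> x ->; apply: subsp_comb.
Qed.



Definition seteq (F : fieldType) (n : nat) (U W : vset F n) := sub_le U W /\ sub_le W U.

Lemma subsp_rank_lt (F : fieldType) (n m1 m2 : nat) (U W : vset F n)
  (B1 : 'M_(m1, n)) (B2 : 'M_(m2, n)) w :
  (forall v, U v <-> (v <= B1)%MS) -> (forall v, W v <-> (v <= B2)%MS) ->
  sub_le U W -> W w -> ~ U w -> (\rank B1 < \rank B2)%N.
Proof.
move=> H1 H2 UW Ww Uw; apply: rank_ltmx; rewrite ltmxE; apply/andP; split.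
  apply/row_subP => i; apply/H2; apply: UW; apply/H1; exact: row_sub.
apply/negP => H; apply: Uw; apply/H1; apply: submx_trans H; exact/H2.
Qed.

Section Mod.
Variables (F : fieldType) (A : falgType F) (n : nat) (rho : A -> 'M[F]_n).
Hypothesis uni : uniserial rho.

Lemma seteq_refl (U : vset F n) : seteq U U.
Proof. by split. Qed.
Lemma seteq_sym (U W : vset F n) : seteq U W -> seteq W U.
Proof. by case. Qed.
Lemma seteq_trans (U V W : vset F n) : seteq U V -> seteq V W -> seteq U W.
Proof. by case=> a b [c d]; split=> v H; [apply: c; apply: a | apply: b; apply: d]. Qed.

Lemma issub_ext (U W : vset F n) : seteq U W -> issub rho U -> issub rho W.
Proof.
case=> UW WU [U0 UD UZ UM]; split.
- exact: UW.
- by move=> u v /WU Hu /WU Hv; apply: UW; apply: UD.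
- by move=> c u /WU Hu; apply: UW; apply: UZ.
- by move=> a u /WU Hu; apply: UW; apply: UM.
Qed.

Lemma relsimple_ext (N N' W W' : vset F n) : seteq N N' -> seteq W W' ->
  relsimple rho N W -> relsimple rho N' W'.
Proof.
move=> [a b] [c d] [sW NW [v [Wv Nv]] simp]; split.
- exact: issub_ext sW.
- by move=> x /b /NW /c.
- by exists v; split; [apply: c | move/b].
- move=> X sX NX XW.
  have [H|H] := simp X sX (fun x Hx => NX x (a x Hx)) (fun x Hx => d x (XW x Hx)).
    by left=> x /H /a.
  by right=> x /d /H.
Qed.

Lemma rad_ext (U U' : vset F n) : seteq U U' -> seteq (Defs.rad rho U) (Defs.rad rho U').
Proof.
move=> E; split=> v [Uv H]; split; try by (case: E => a b; auto).
- move=> W sW rW; apply: H => //; apply: relsimple_ext rW => //; [exact: seteq_refl| exact: seteq_sym].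
- move=> W sW rW; apply: H => //; apply: relsimple_ext rW => //; exact: seteq_refl.
Qed.

Lemma relsoc_ext (N N' : vset F n) : seteq N N' -> seteq (relsoc rho N) (relsoc rho N').
Proof.
move=> E; split=> v H X sX NX HW; apply: H => //.
- by move=> x /(proj1 E) /NX.
- move=> W rW; apply: HW; apply: relsimple_ext rW => //; exact: seteq_refl.
- by move=> x /(proj2 E) /NX.
- move=> W rW; apply: HW; apply: relsimple_ext rW => //; [exact: seteq_sym| exact: seteq_refl].
Qed.

Lemma whole_issub : issub rho (fun _ => True).
Proof. by split. Qed.

Lemma minimal_above (N : vset F n) : issub rho N ->
  (exists v, ~ N v) ->
  exists W, relsimple rho N W /\
     forall X, issub rho X -> sub_le N X -> (exists v, X v /\ ~ N v) -> sub_le W X.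
Proof.
move=> sN [w0 Nw0].
suff H: forall r X, issub rho X -> sub_le N X -> (exists v, X v /\ ~ N v) ->
   (exists m (B : 'M[F]_(m, n)), (forall v, X v <-> (v <= B)%MS) /\ (\rank B <= r)%N) ->
   exists W, relsimple rho N W /\
     forall X, issub rho X -> sub_le N X -> (exists v, X v /\ ~ N v) -> sub_le W X.
  apply: (H n (fun _ => True)) => //.
  - by exists w0.
  - have [m [B HB]] := subsp_mx (issub_subsp whole_issub).
    by exists m, B; split=> //; exact: rank_leq_col.
elim=> [|r IH] X sX NX [v [Xv Nv]] [m [B [HB Hr]]].
  exfalso; apply: Nv; move: Xv => /HB; move: Hr; rewrite leqn0 mxrank_eq0 => /eqP ->.
  move/submx0null ->; by case: sN.
have [[Y [sY [NY [[w [Yw Nw]] nXY]]]]|nY] := classic (exists Y, issub rho Y /\ sub_le N Y /\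
    (exists w, Y w /\ ~ N w) /\ ~ sub_le X Y).
  have YX : sub_le Y X by case: (uni sY sX) => // H; exfalso; exact: nXY.
  have [u Hu] : exists u, ~ (X u -> Y u) by apply: not_all_ex_not.
  have [Xu Yu] := imply_to_and _ _ Hu.
  apply: (IH Y sY NY); first by exists w.
  have [m' [B' HB']] := subsp_mx (issub_subsp sY).
  exists m', B'; split=> //.
  have := subsp_rank_lt HB' HB YX Xu Yu.
  by move=> H; rewrite -ltnS; apply: leq_trans H Hr.
have minX : forall Y, issub rho Y -> sub_le N Y -> (exists w, Y w /\ ~ N w) -> sub_le X Y.
  move=> Y sY NY HY; apply: NNPP => H; apply: nY; exists Y; tauto.
exists X; split=> //; split=> //; first by exists v.
move=> Z sZ NZ ZX; have [[w [Zw Nw]]|nZ] := classic (exists w, Z w /\ ~ N w).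
  by right; apply: minX => //; exists w.
left=> w Zw; apply: NNPP => Nw; apply: nZ; by exists w.
Qed.

Lemma relsoc_step (N : vset F n) : issub rho N ->
  [/\ issub rho (relsoc rho N), sub_le N (relsoc rho N),
     ((forall v, N v) -> forall v, relsoc rho N v) &
     (~ (forall v, N v) -> relsimple rho N (relsoc rho N) /\
        forall X, issub rho X -> sub_le N X -> (exists v, X v /\ ~ N v) ->
          sub_le (relsoc rho N) X)].
Proof.
move=> sN.
have Nsub : sub_le N (relsoc rho N) by move=> v Nv X sX NX _; exact: NX.
have [Hall|Hn] := classic (forall v, N v).
  have E : seteq N (relsoc rho N) by split=> // v _; exact: Hall.
  split=> //; first exact: issub_ext E sN.
  by move=> _ v; apply: Nsub.
have [w Nw] := not_all_ex_not _ _ Hn.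
have [W [rW minW]] := minimal_above sN (ex_intro _ w Nw).
have [sW NW [x [Wx Nx]] _] := rW.
have E : seteq W (relsoc rho N).
  split.
    by move=> v Wv X sX NX HW; apply: (HW W rW).
  move=> v Hv; apply: Hv => // W' rW'.
  have [sW' NW' [y [W'y Ny]] simp'] := rW'.
  have WW' := minW W' sW' NW' (ex_intro _ y (conj W'y Ny)).
  case: (simp' W sW NW WW') => // H; exfalso; exact: Nx (H x Wx).
split=> //; first exact: issub_ext E sW.
move=> _; split.
  apply: relsimple_ext rW => //; exact: seteq_refl.
move=> X sX NX HX v /(proj2 E) Wv; exact: minW.
Qed.

Lemma rad_char (U N : vset F n) : issub rho U -> issub rho N -> relsimple rho N U ->
  (forall X, issub rho X -> sub_le X U -> (exists v, U v /\ ~ X v) -> sub_le X N) ->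
  seteq (Defs.rad rho U) N.
Proof.
move=> sU sN rN maxN; have [_ NU [x [Ux Nx]] _] := rN; split.
  by move=> v [Uv H]; apply: H.
move=> v Nv; split; first exact: NU.
move=> W sW rW; have [_ WU [y [Uy Wy]] simpW] := rW.
have WN := maxN W sW WU (ex_intro _ y (conj Uy Wy)).
case: (simpW N sN WN NU) => H; [exact: H | exfalso; exact: Nx (H x Ux)].
Qed.

Lemma rad_zero (U : vset F n) : issub rho U -> sub_le U (@zero_set F n) ->
  seteq (Defs.rad rho U) U.
Proof.
move=> sU Uz; split; first by move=> v [].
move=> v Uv; split=> // W sW _; rewrite (Uz v Uv); by case: sW.
Qed.

Notation S := (socpow rho).

Lemma S_succ i : S i.+1 = relsoc rho (S i).
Proof. by []. Qed.

Lemma S_issub i : issub rho (S i).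
Proof.
elim: i => [|i IH]; first by split=> //= [u v -> ->|c u ->|a u ->]; rewrite ?addr0 ?scaler0 ?mul0mx.
by rewrite S_succ; case: (relsoc_step IH).
Qed.

Lemma S_mono i j : (i <= j)%N -> sub_le (S i) (S j).
Proof.
move=> /subnK <-; elim: (j - i)%N => [|k IH] //=.
move=> v /IH; by case: (relsoc_step (S_issub (k + i))) => _ H _ _; apply: H.
Qed.

Definition isend e := (forall v, S e v) /\ forall j, (j < e)%N -> ~ (forall v, S j v).

Lemma exists_end : exists e, isend e.
Proof.
have step : forall i, (exists j, (j <= i)%N /\ forall v, S j v) \/
   exists m (B : 'M[F]_(m, n)), (forall v, S i v <-> (v <= B)%MS) /\ (i <= \rank B)%N.
  elim=> [|i [[j [ji Hj]]|[m [B [HB Hi]]]]].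
  - right; have [m [B HB]] := subsp_mx (issub_subsp (S_issub 0)).
    by exists m, B.
  - by left; exists j; split=> //; apply: leqW.
  - have [Hall|Hn] := classic (forall v, S i v).
      by left; exists i; split.
    case: (relsoc_step (S_issub i)) => sS' _ _ /(_ Hn) [[_ _ [x [S'x Sx]] _] _].
    right; have [m' [B' HB']] := subsp_mx (issub_subsp sS').
    exists m', B'; split=> //.
    apply: leq_ltn_trans Hi _.
    exact: subsp_rank_lt HB HB' (S_mono (leqnSn i)) S'x Sx.
have [[j [_ Hj]]|[m [B [_ H]]]] := step n.+1; last first.
  by have := rank_leq_col B; rewrite leqNgt (leq_trans _ H).
suff: forall k j, (j <= k)%N -> (forall v, S j v) -> exists e, isend e.
  by move=> H; apply: (H j j (leqnn j) Hj).
elim=> [|k IH] j0 jk Hj0.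
  move: jk; rewrite leqn0 => /eqP Ej; subst j0.
  by exists 0%N; split.
have [[j' [j'k Hj']]|Hn] := classic (exists j, (j <= k)%N /\ forall v, S j v).
  exact: IH j'k Hj'.
exists j0; split=> // j' j'j Hj'; apply: Hn; exists j'; split=> //.
by rewrite -ltnS (leq_trans j'j jk).
Qed.

Section Ends.
Variable e : nat.
Hypothesis He : isend e.

Lemma S_whole_after i : (e <= i)%N -> forall v, S i v.
Proof. by move=> ei v; apply: (S_mono ei); case: He. Qed.

Lemma S_simple i : (i < e)%N -> relsimple rho (S i) (S i.+1).
Proof.
move=> ie; case: He => _ /(_ i ie) Hn.
by case: (relsoc_step (S_issub i)) => _ _ _ /(_ Hn) [].
Qed.

Lemma S_strict i j : (i < j)%N -> (j <= e)%N -> exists v, S j v /\ ~ S i v.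
Proof.
move=> ij je; have [_ _ [v [Sv nS]] _] := S_simple (leq_trans ij je).
by exists v; split=> //; apply: (S_mono ij).
Qed.

Lemma S_le_inv i j : (j <= e)%N -> sub_le (S j) (S i) -> (j <= i)%N.
Proof.
move=> je H; rewrite leqNgt; apply/negP => ij.
by have [v [Sv nS]] := S_strict ij je; apply: nS; apply: H.
Qed.

Lemma S_all U : issub rho U -> exists i, (i <= e)%N /\ seteq U (S i).
Proof.
move=> sU.
suff: forall k, (k <= e)%N -> sub_le U (S k) -> exists i, (i <= k)%N /\ seteq U (S i).
  move=> /(_ e (leqnn e)) H; have [|i [ie E]] := H.
    by move=> v _; apply: S_whole_after.
  by exists i.
elim=> [|k IH] ke Uk.
  exists 0%N; split=> //; split=> // v /= ->; by case: sU.
have [H|H] := classic (sub_le U (S k)).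
  by have [i [ik E]] := IH (ltnW ke) H; exists i; split=> //; apply: leqW.
have kU : sub_le (S k) U by case: (uni (S_issub k) sU) => // H'; exfalso; exact: H H'.
have [_ _ _ simp] := S_simple ke.
case: (simp U sU kU Uk) => // H'.
by exists k.+1; split.
Qed.

Lemma radpow_S l : seteq (radpow rho l) (S (e - l)).
Proof.
elim: l => [|l IH].
  rewrite subn0; split=> // v _; exact: S_whole_after.
have E1 : seteq (radpow rho l.+1) (Defs.rad rho (S (e - l))) by apply: rad_ext.
apply: seteq_trans E1 _.
case El: (e - l)%N => [|k].
  rewrite (_ : e - l.+1 = 0)%N; last by rewrite subnS El.
  apply: rad_zero; [exact: S_issub | by move=> v].
rewrite (_ : e - l.+1 = k)%N; last by rewrite subnS El.
have ke : (k < e)%N by apply: leq_trans (leq_subr l e); rewrite El.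
apply: rad_char; [exact: S_issub | exact: S_issub | exact: S_simple |].
move=> X sX XS [v [Sv Xv]].
case: (uni sX (S_issub k)) => // kX.
have [_ _ _ simp] := S_simple ke.
case: (simp X sX kX XS) => // H; exfalso; exact: Xv (H v Sv).
Qed.

Lemma loewy_e d : loewy_length rho d -> d = e.
Proof.
case=> Hd Hlt.
have [ed|de|//] := ltngtP e d.
  exfalso; apply: (Hlt e ed) => v /(proj1 (radpow_S e)); by rewrite subnn.
have h0 : (0 < e - d)%N by rewrite subn_gt0.
have [v [Sv nS]] := @S_strict 0%N (e - d)%N h0 (leq_subr d e).
by exfalso; apply: nS; apply: Hd; apply: (proj2 (radpow_S d)).
Qed.
End Ends.
End Mod.



Definition pre (F : fieldType) (n1 n2 : nat) (f : 'M[F]_(n1, n2)) (V : vset F n2) : vset F n1 :=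
  fun v => V (v *m f).
Definition imgof (F : fieldType) (n1 n2 : nat) (X : vset F n1) (f : 'M[F]_(n1, n2)) : vset F n2 :=
  fun w => exists v, X v /\ w = v *m f.

Section Hom.
Variables (F : fieldType) (A : falgType F) (n1 n2 : nat).
Variables (rho1 : A -> 'M[F]_n1) (rho2 : A -> 'M[F]_n2).

Lemma pre_issub f V : is_hom rho1 rho2 f -> issub rho2 V -> issub rho1 (pre f V).
Proof.
move=> hf [V0 VD VZ VM]; split; rewrite /pre.
- by rewrite mul0mx.
- by move=> u v Hu Hv; rewrite mulmxDl; apply: VD.
- by move=> c u Hu; rewrite -scalemxAl; apply: VZ.
- by move=> a u Hu; rewrite -mulmxA hf mulmxA; apply: VM.
Qed.

Lemma imgof_issub f X : is_hom rho1 rho2 f -> issub rho1 X -> issub rho2 (imgof X f).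
Proof.
move=> hf [X0 XD XZ XM]; split; rewrite /imgof.
- by exists 0; rewrite mul0mx.
- by move=> u v [x [Xx ->]] [y [Xy ->]]; exists (x + y); rewrite mulmxDl; split=> //; apply: XD.
- by move=> c u [x [Xx ->]]; exists (c *: x); rewrite scalemxAl; split=> //; apply: XZ.
- by move=> a u [x [Xx ->]]; exists (x *m rho1 a); rewrite -mulmxA -hf mulmxA; split=> //; apply: XM.
Qed.

Lemma hom_lin g h c : is_hom rho1 rho2 g -> is_hom rho1 rho2 h -> is_hom rho1 rho2 (g - c *: h).
Proof. by move=> hg hh a; rewrite mulmxBr mulmxBl hg -scalemxAr hh scalemxAl. Qed.

Lemma hom_sum (I : Type) (r : seq I) (P : pred I) (G : I -> 'M[F]_(n1, n2)) :
  (forall i, P i -> is_hom rho1 rho2 (G i)) -> is_hom rho1 rho2 (\sum_(i <- r | P i) G i).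
Proof.
move=> HG a; elim: r => [|x r IH]; first by rewrite big_nil mulmx0 mul0mx.
rewrite big_cons; case: ifP => Px; last exact: IH.
by rewrite mulmxDr mulmxDl HG // IH.
Qed.
End Hom.

Lemma schur (F : closedFieldType) (A : falgType F) (n1 n2 : nat)
  (rho1 : A -> 'M[F]_n1) (rho2 : A -> 'M[F]_n2) (X : vset F n1) (U V : vset F n2)
  (g h : 'M[F]_(n1, n2)) :
  issub rho1 X -> relsimple rho1 X (fun _ => True) -> issub rho2 U ->
  is_hom rho1 rho2 g -> is_hom rho1 rho2 h ->
  (forall v, V (v *m g)) -> (forall w, V w -> exists v, w = v *m h) ->
  (forall v, X v -> U (v *m g)) -> (forall v, X v -> U (v *m h)) ->
  exists c, forall v, U (v *m (g - c *: h)).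
Proof.
move=> sX rX sU hg hh Vg Vh Xg Xh.
have [_ _ [y1 [_ Xy1]] simp] := rX.
have sUs := issub_subsp sU.
have [m [Bx HBx]] := subsp_mx (issub_subsp sX).
pose C := (Bx^C)%MS; pose K := row_base C; pose k := \rank C.
have kpos : (0 < k)%N.
  rewrite /k mxrank_compl subn_gt0 ltn_neqAle rank_leq_col andbT.
  apply/negP => Hf; apply: Xy1; apply/HBx; exact: submx_full.
have decomp : forall w : 'rV_n1, exists u (x : 'rV_k), X u /\ w = u + x *m K.
  move=> w; have : (w <= Bx + C)%MS by apply: submx_full; exact: addsmx_compl_full.
  case/sub_addsmxP => [[a b]] /= ->.
  have : (b *m C <= K)%MS by rewrite /K eq_row_base submxMl.
  case/submxP => x ->; exists (a *m Bx), x; split=> //; apply/HBx; exact: submxMl.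
have indep : forall x : 'rV_k, X (x *m K) -> x = 0.
  move=> x /HBx H1.
  have H2 : (x *m K <= C)%MS by apply: submx_trans (submxMl _ _) _; rewrite /K eq_row_base.
  have : (x *m K <= Bx :&: C)%MS by rewrite sub_capmx H1 H2.
  rewrite capmx_compl => /submx0null /eqP; rewrite mulmx_free_eq0 ?row_base_free //.
  by move/eqP.
have : forall i : 'I_k, exists x : 'rV_k, U (row i K *m g - x *m K *m h).
  move=> i; have [w ->] := Vh _ (Vg (row i K)).
  have [u [x1 [Xu ->]]] := decomp w.
  by exists x1; rewrite mulmxDl addrK; apply: Xh.
case/fin_all_exists => xs Hxs.
pose P := \matrix_(i < k) xs i.
have Hs : size (char_poly P) != 1%N.
  rewrite size_char_poly; move: kpos; rewrite /k; case: (\rank C) => //.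
have [c Hc] : exists c, root (char_poly P) c by apply/closed_rootP.
have : eigenvalue P c by rewrite eigenvalue_root_char.
case/eigenvalueP => y0 Hy0 nz.
exists c.
pose Z := pre (g - c *: h) U.
have sZ : issub rho1 Z.
  exact: (pre_issub (hom_lin c hg hh) sU).
have XZ : sub_le X Z.
  move=> v Xv; rewrite /Z /pre mulmxBr -scalemxAr.
  by apply: subsp_sub => //; [exact: Xg | case: sUs => _ _ UZ; apply: UZ; exact: Xh].
case: (simp Z sZ XZ (fun _ _ => I)) => [ZX|H v]; last exact: H.
exfalso; move/eqP: nz; apply; apply: indep; apply: ZX.
pose D := K *m g - P *m K *m h.
have UD : U (y0 *m D).
  apply: subsp_comb => // i.
  by rewrite /D linearB /= (row_mul i K g) (row_mul i (P *m K) h) (row_mul i P K) rowK; apply: Hxs.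
have E : y0 *m D = (y0 *m K) *m (g - c *: h).
  by rewrite /D !mulmxBr !mulmxA Hy0; congr (_ - _); rewrite -!mulmxA -scalemxAl !scalemxAr.
by rewrite /Z /pre -E.
Qed.



Section Main.
Variables (F : closedFieldType) (A : falgType F) (n1 n2 : nat).
Variables (rho1 : A -> 'M[F]_n1) (rho2 : A -> 'M[F]_n2).
Hypotheses (uni1 : uniserial rho1) (uni2 : uniserial rho2).
Variables (e1 e2 : nat).
Hypotheses (He1 : isend rho1 e1) (He2 : isend rho2 e2).

Notation T := (socpow rho1).
Notation S := (socpow rho2).

Lemma ker_img f l : is_hom rho1 rho2 f -> (l <= e2)%N ->
  seteq (imgof (fun _ => True) f) (S l) ->
  (l <= e1)%N /\ seteq (pre f (@zero_set F n2)) (T (e1 - l)).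
Proof.
move=> hf le2 Eimg.
have sker : issub rho1 (pre f (@zero_set F n2)) := pre_issub hf (S_issub uni2 0).
have [j [je1 Ej]] := S_all uni1 He1 sker.
have claim : forall i, (i <= l)%N -> (j + i <= e1)%N /\ seteq (pre f (S i)) (T (j + i)).
  elim=> [|i IH] il; first by rewrite addn0.
  have [ji E] := IH (ltnW il).
  have sPn : issub rho1 (pre f (S i.+1)) := pre_issub hf (S_issub uni2 _).
  have [k [ke1 Ek]] := S_all uni1 He1 sPn.
  have ie2 : (i < e2)%N := leq_trans il le2.
  have [w [Sw nSw]] := S_strict uni2 He2 (ltnSn i) ie2.
  have [v [_ Ew]] := proj2 Eimg w (S_mono uni2 il Sw); subst w.
  have jik : (j + i < k)%N.
    rewrite ltnNge; apply/negP => kji; apply: nSw.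
    by apply: (proj2 E); apply: (S_mono uni1 kji); apply: (proj1 Ek).
  have jie : (j + i.+1 <= e1)%N by rewrite addnS (leq_trans jik ke1).
  have TP : sub_le (T (j + i.+1)) (pre f (S i.+1)).
    by move=> u Hu; apply: (proj2 Ek); apply: (S_mono uni1 _ Hu); rewrite addnS.
  split=> //; split=> //.
  pose Y := imgof (T (j + i.+1)) f.
  have sY : issub rho2 Y := imgof_issub hf (S_issub uni1 _).
  have SY : sub_le (S i) Y.
    move=> w' Sw'; have [v' [_ Ew']] := proj2 Eimg w' (S_mono uni2 (ltnW il) Sw').
    subst w'; exists v'; split=> //.
    have hle : (j + i <= j + i.+1)%N by rewrite addnS leqnSn.
    exact: (S_mono uni1 hle (proj1 E v' Sw')).
  have YS : sub_le Y (S i.+1) by move=> w' [u [Hu ->]]; apply: TP.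
  have [_ _ _ simp] := S_simple uni2 He2 ie2.
  case: (simp Y sY SY YS) => H.
    exfalso; have : (j + i.+1 <= j + i)%N.
      apply: (S_le_inv uni1 He1 jie) => u Hu; apply: (proj1 E).
      by apply: H; exists u.
    by rewrite addnS ltnn.
  move=> u Pu; have [u' [Hu' Eu]] := H _ Pu.
  have Hd : pre f (@zero_set F n2) (u - u') by rewrite /pre /zero_set mulmxBl Eu subrr.
  have Td : T (j + i.+1) (u - u').
    by apply: (S_mono uni1 (leq_addr _ _)); apply: (proj1 Ej).
  have [_ TD _ _] := S_issub uni1 (j + i.+1).
  by have := TD _ _ Td Hu'; rewrite subrK.
have [jl E] := claim l (leqnn l).
have Tall : forall v, T (j + l) v by move=> v; apply: (proj1 E); apply: (proj1 Eimg); exists v.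
have ejl : j + l = e1.
  apply/eqP; rewrite eqn_leq jl /= leqNgt; apply/negP => H.
  by case: He1 => _ /(_ _ H).
split; first by rewrite -ejl leq_addl.
by rewrite -ejl addnK.
Qed.

Lemma img_rad f l : is_hom rho1 rho2 f -> (l < e2)%N -> (l < e1)%N ->
  seteq (imgof (fun _ => True) f) (S l.+1) ->
  sub_le (pre f (@zero_set F n2)) (T (e1 - l.+1)) ->
  forall v, T (e1 - 1) v -> S l (v *m f).
Proof.
move=> hf le2 le1 Eimg Ker.
pose Y := imgof (T (e1 - 1)) f.
have sY : issub rho2 Y := imgof_issub hf (S_issub uni1 _).
suff : sub_le Y (S l) by move=> H v Tv; apply: H; exists v.
case: (uni2 sY (S_issub uni2 l)) => // lY.
have YS : sub_le Y (S l.+1) by move=> w [u [_ ->]]; apply: (proj1 Eimg); exists u.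
have [_ _ _ simp] := S_simple uni2 He2 le2.
case: (simp Y sY lY YS) => // H; exfalso.
have e1pos : (e1 - 1 < e1)%N by rewrite subn1 prednK // (leq_ltn_trans _ le1).
case: He1 => _ /(_ _ e1pos); apply => v.
have [u [Tu Eu]] := H _ (proj1 Eimg _ (ex_intro _ v (conj I erefl))).
have Hd : pre f (@zero_set F n2) (v - u) by rewrite /pre /zero_set mulmxBl Eu subrr.
have Td : T (e1 - 1) (v - u).
  apply: (S_mono uni1 _ (Ker _ Hd)); rewrite leq_sub2l //.
have [_ TD _ _] := S_issub uni1 (e1 - 1).
by have := TD _ _ Td Tu; rewrite subrK.
Qed.


Variable alpha : nat -> 'M[F]_(n1, n2).
Hypothesis Hal : forall l, Sset rho1 rho2 e1 e2 l -> quot_rad_iso_soc rho1 rho2 l (alpha l).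

Lemma alpha_facts l : Sset rho1 rho2 e1 e2 l ->
  [/\ is_hom rho1 rho2 (alpha l), (l <= e1)%N, (l <= e2)%N,
      seteq (imgof (fun _ => True) (alpha l)) (S l)
    & sub_le (pre (alpha l) (@zero_set F n2)) (T (e1 - l))].
Proof.
move=> HS; have [/andP [l1 lmin] _] := HS.
have [h K I] := Hal HS.
move: lmin; rewrite leq_min => /andP [le1 le2].
split=> //.
  split.
    by move=> w [v [_ ->]]; apply/(I _); exists v.
  by move=> w /(I w) [v ->]; exists v.
move=> v /(K v) Hr; exact: (proj1 (radpow_S uni1 He1 l)).
Qed.

Lemma sum_split (G : nat -> 'M[F]_(n1, n2)) l : (1 <= l <= minn e1 e2)%N ->
  \sum_(1 <= m < (minn e1 e2).+1) G m =
    G l + \sum_(m <- index_iota 1 (minn e1 e2).+1 | m != l) G m.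
Proof.
move=> Hl; rewrite (bigD1_seq l) //=; first by rewrite mem_index_iota ltnS.
exact: iota_uniq.
Qed.

Lemma spanning l : (l <= e2)%N -> forall f, is_hom rho1 rho2 f -> (forall v, S l (v *m f)) ->
  exists c : nat -> F, (forall m, ~ Sset rho1 rho2 e1 e2 m -> c m = 0) /\
    f = \sum_(1 <= m < (minn e1 e2).+1) c m *: alpha m.
Proof.
elim: l => [|l IH] le2 f hf Hf.
  exists (fun _ => 0); split=> //.
  rewrite big1 => [|m _]; last by rewrite scale0r.
  apply/row_matrixP => i; rewrite row0 rowE; exact: Hf.
have [Hl|Hnl] := classic (forall v, S l (v *m f)).
  exact: IH (ltnW le2) f hf Hl.
have [v0 nv0] := not_all_ex_not _ _ Hnl.
have sI : issub rho2 (imgof (fun _ => True) f) := imgof_issub hf (whole_issub rho1).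
have Eimg : seteq (imgof (fun _ => True) f) (S l.+1).
  split; first by move=> w [v [_ ->]]; exact: Hf.
  case: (uni2 sI (S_issub uni2 l)) => [H|lI].
    by exfalso; apply: nv0; apply: H; exists v0.
  have [_ _ _ simp] := S_simple uni2 He2 le2.
  have IS : sub_le (imgof (fun _ => True) f) (S l.+1) by move=> w [v [_ ->]]; exact: Hf.
  case: (simp _ sI lI IS) => // H.
  by exfalso; apply: nv0; apply: H; exists v0.
have [le1 Ker] := ker_img hf le2 Eimg.
have HS : Sset rho1 rho2 e1 e2 l.+1.
  split; first by rewrite leq_min le1 le2.
  exists f; split=> //.
    move=> v; split.
      move=> Hv; apply: (proj2 (radpow_S uni1 He1 l.+1)); exact: (proj1 Ker).
    move=> /(proj1 (radpow_S uni1 He1 l.+1)) Hv; exact: (proj2 Ker).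
  move=> w; split.
    by move=> /(proj2 Eimg) [v [_ ->]]; exists v.
  by move=> [v ->]; apply: (proj1 Eimg); exists v.
have [ha _ _ Ia Ka] := alpha_facts HS.
have e1pos : (0 < e1)%N by apply: leq_ltn_trans le1.
have rX : relsimple rho1 (T (e1 - 1)) (fun _ => True).
  have hi : (e1 - 1 < e1)%N by rewrite subn1 prednK.
  have := S_simple uni1 He1 hi.
  apply: relsimple_ext; first exact: seteq_refl.
  rewrite subn1 prednK //; split=> // v _; by case: He1.
have [c Hc] := schur (S_issub uni1 _) rX (S_issub uni2 l) hf ha Hf
  (fun w Sw => match proj2 Ia w Sw with ex_intro v (conj _ Ev) => ex_intro _ v Ev end)
  (img_rad hf le2 le1 Eimg (proj1 Ker)) (img_rad ha le2 le1 Ia Ka).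
have [c' [Hc' Ec']] := IH (ltnW le2) _ (hom_lin c hf ha) Hc.
exists (fun m => c' m + (if m == l.+1 then c else 0)); split.
  move=> m Hm; rewrite Hc' // add0r; case: eqP => // Em; subst m; by exfalso.
have Hrng : (1 <= l.+1 <= minn e1 e2)%N by rewrite leq_min le1 le2.
under eq_bigr do rewrite scalerDl.
rewrite big_split /= -Ec' (sum_split _ Hrng) eqxx big1 ?addr0 ?subrK // => m /negbTE ->.
by rewrite scale0r.
Qed.

Lemma independence (c : nat -> F) : (forall m, ~ Sset rho1 rho2 e1 e2 m -> c m = 0) ->
  \sum_(1 <= m < (minn e1 e2).+1) c m *: alpha m = 0 -> forall m, c m = 0.
Proof.
move=> Hc H0.
suff claim : forall l, (forall m, (l < m)%N -> c m = 0) -> forall m, c m = 0.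
  apply: (claim (minn e1 e2)) => m Hm; apply: Hc => [[/andP [_ Hle] _]].
  by rewrite leqNgt Hm in Hle.
elim=> [|l IH] Hl.
  move=> [|m]; last by apply: Hl.
  by apply: Hc => [[/andP [H _] _]].
apply: IH => m lm.
have [/eqP Em|Hm] := boolP (m == l.+1); last first.
  by apply: Hl; rewrite ltn_neqAle eq_sym Hm lm.
subst m.
have [HS|nS] := classic (Sset rho1 rho2 e1 e2 l.+1); last exact: Hc.
have [ha le1 le2 Ia Ka] := alpha_facts HS.
have Hrng : (1 <= l.+1 <= minn e1 e2)%N by rewrite leq_min le1 le2.
have [//|Hnz] := classic (c l.+1 = 0).
exfalso.
have sS := issub_subsp (S_issub uni2 l).
move: H0; rewrite (sum_split _ Hrng).
set R := \sum_(m <- _ | _) _ => H0.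
have RS : forall v, S l (v *m R).
  move=> v; rewrite /R mulmx_sumr; apply: subsp_sum => // m Hm.
  case: (ltngtP m l.+1) => [ml|lm'|Eq].
  - have [HSm|nSm] := classic (Sset rho1 rho2 e1 e2 m); last first.
      by rewrite Hc // scale0r mulmx0; case: sS.
    have [_ _ _ Iam _] := alpha_facts HSm.
    rewrite -scalemxAr; case: sS => _ _ UZ; apply: UZ.
    apply: (S_mono uni2 (i := m)); first by rewrite -ltnS.
    by apply: (proj1 Iam); exists v.
  - by rewrite Hl // scale0r mulmx0; case: sS.
  - by rewrite Eq eqxx in Hm.
have Hal1 : forall v, S l (v *m alpha l.+1).
  move=> v; have : S l (c l.+1 *: (v *m alpha l.+1)).
    have E : c l.+1 *: alpha l.+1 = - R by apply/eqP; rewrite -addr_eq0 H0.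
    rewrite scalemxAr E mulmxN; apply: subsp_opp => //; exact: RS.
  case: sS => _ _ UZ /(UZ (c l.+1)^-1).
  by rewrite scalerA mulVf ?scale1r //; apply/eqP.
have [w [Sw nSw]] := S_strict uni2 He2 (ltnSn l) le2.
have [v [_ Ew]] := proj2 Ia w Sw.
by apply: nSw; rewrite Ew.
Qed.
End Main.

Unset Implicit Arguments.

Theorem proposition4p2 (F : closedFieldType) (A : falgType F) (n1 n2 : nat)
  (rho1 : A -> 'M[F]_n1) (rho2 : A -> 'M[F]_n2) (d1 d2 : nat)
  (alpha : nat -> 'M[F]_(n1, n2)) :
  is_rmodule rho1 -> is_rmodule rho2 ->
  (0 < n1)%N -> (0 < n2)%N ->
  uniserial rho1 -> uniserial rho2 ->
  loewy_length rho1 d1 -> loewy_length rho2 d2 ->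
  (forall l, Sset rho1 rho2 d1 d2 l -> quot_rad_iso_soc rho1 rho2 l (alpha l)) ->
  (* linear independence of {alpha_l : l in S} *)
  (forall c : nat -> F, (forall l, ~ Sset rho1 rho2 d1 d2 l -> c l = 0) ->
     \sum_(1 <= l < (minn d1 d2).+1) c l *: alpha l = 0 ->
     forall l, c l = 0) /\
  (* spanning Hom(M1, M2) *)
  (forall f : 'M[F]_(n1, n2), is_hom rho1 rho2 f ->
     exists c : nat -> F, (forall l, ~ Sset rho1 rho2 d1 d2 l -> c l = 0) /\
       f = \sum_(1 <= l < (minn d1 d2).+1) c l *: alpha l).
Proof.
move=> _ _ _ _ uni1 uni2 L1 L2 Hal.
have [e1 He1] := exists_end uni1.
have [e2 He2] := exists_end uni2.
have E1 := loewy_e uni1 He1 L1.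
have E2 := loewy_e uni2 He2 L2.
subst d1 d2.
split.
  move=> c Hc H0; exact: (independence uni1 uni2 He1 He2 Hal Hc H0).
move=> f hf.
apply: (spanning uni1 uni2 He1 He2 Hal (leqnn e2) hf) => v.
by case: He2.
Qed.
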